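(* Let $\mathcal{F}$, $B_1,\dots,B_m$ be as in the context. Suppose there exist distinct sets $Y_1,\dots,Y_s\in\binom{[n]}{d+1}\setminus\mathcal{F}$ and sets $Z_i\subseteq Y_i$ with $|Z_i|=d$ ($i\in[s]$) such that: (1) $Z_i\neq B_j$ for all $i\in[s]$, $j\in[m]$; (2) $|Y_i\cap Y_j|\le d-1$ for all distinct $i,j\in[s]$; (3) for all $i<j$ in $[s]$ there is no $k\in[m]$ with both $F_k\cap Y_i=Z_i$ and $F_k\cap Y_j=B_k$. Then $|\mathcal{F}|\le\binom{n}{d}-s$.
   Context: Let $\mathcal{F}=\{F_1,\dots,F_m\}\subseteq\binom{[n]}{d+1}$ consist of distinct sets and have VC-dimension at most $d$ (no $(d+1)$-set $S$ is shattered, i.e. no $S$ such that every $A\subseteq S$ equals $F\cap S$ for some $F\in\mathcal{F}$). For $i\in[m]$, call $B\subsetneq F_i$ admissible for $F_i$ if $F\cap F_i\neq B$ for every $F\in\mathcal{F}$ (admissible sets exist by the VC-dimension assumption). For each $i$, $B_i$ is a fixed admissible set for $F_i$ of maximum cardinality among all admissible sets for $F_i$. *)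

(* Defs.v *)
From mathcomp Require Import all_boot.
Set Implicit Arguments. Unset Strict Implicit. Unset Printing Implicit Defensive.

Definition shattered (n m : nat) (F : 'I_m -> {set 'I_n}) (S : {set 'I_n}) : Prop :=
  forall A : {set 'I_n}, A \subset S -> exists k : 'I_m, F k :&: S = A.

Definition vc_dim_le (n m : nat) (F : 'I_m -> {set 'I_n}) (d : nat) : Prop :=
  forall S : {set 'I_n}, #|S| = d.+1 -> ~ shattered F S.

Definition admissible (n m : nat) (F : 'I_m -> {set 'I_n}) (i : 'I_m) (B : {set 'I_n}) : Prop :=
  B \proper F i /\ forall k : 'I_m, F k :&: F i != B.

Definition max_admissible (n m : nat) (F : 'I_m -> {set 'I_n}) (i : 'I_m) (B : {set 'I_n}) : Prop :=
  admissible F i B /\ forall B' : {set 'I_n}, admissible F i B' -> #|B'| <= #|B|.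

(* Main.v *)
Require Import Defs.
From mathcomp Require Import all_boot all_algebra.
From mathcomp Require Import ring zify.
Set Implicit Arguments. Unset Strict Implicit. Unset Printing Implicit Defensive.
Import GRing.Theory Num.Theory.

Section Aux.
Local Open Scope ring_scope.
Definition wt (c j : nat) : rat := (-1) ^+ j * (j`! * (c.-1 - j)`!)%:R.

Lemma wt_zero c j : (0 < j)%N -> (j < c)%N -> wt c j.-1 *+ j + wt c j *+ (c - j) = 0.
Proof.
case: j => // i _ lt.
have [k ->] : exists k, c = (i.+2 + k)%N by exists (c - i.+2)%N; rewrite subnKC.
rewrite /wt /= !addSn /= -addSn addnC addnK.
have -> : (k + i.+1 - i = k.+1)%N by rewrite addnS subSn ?leq_addl // addnK.
have -> : ((k + i.+1).+1 - i.+1 = k.+1)%N by rewrite -addSn addnK.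
rewrite !factS !natrM exprS.
ring.
Qed.

Lemma wt_nz c : (0 < c)%N -> wt c c.-1 *+ c + wt c c *+ (c - c) != 0.
Proof.
case: c => // c _; rewrite subnn mulr0n addr0 /wt /= subnn fact0 muln1.
by rewrite mulrn_eq0 /= mulf_eq0 signr_eq0 /= pnatr_eq0 -lt0n fact_gt0.
Qed.
Definition phi (n : nat) (F B T : {set 'I_n}) : rat :=
  if B \subset T then wt #|F :\: B| #|T :&: (F :\: B)| else 0.

Lemma phi_formula n (F B G : {set 'I_n}) : B \subset G ->
  \sum_(x in G) phi F B (G :\ x) =
  wt #|F :\: B| (#|G :&: (F :\: B)|).-1 *+ #|G :&: (F :\: B)|
  + wt #|F :\: B| #|G :&: (F :\: B)| *+ #|(G :\: B) :\: (F :\: B)|.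
Proof.
move=> BG; set C := F :\: B.
rewrite (big_setID B) /= big1 ?add0r; last first.
  move=> x /setIP [xG xB]; rewrite /phi ifF //; apply/negP => /subsetP /(_ x xB).
  by rewrite !inE eqxx.
rewrite (big_setID C) /=.
have -> : (G :\: B) :&: C = G :&: C.
  by apply/setP => y; rewrite !inE; case: (y \in B); case: (y \in F); case: (y \in G).
congr (_ + _).
  rewrite -sumr_const; apply: eq_bigr => x /setIP [xG xC].
  rewrite /phi ifT; last first.
    apply/subsetP => y yB; rewrite !inE (subsetP BG) // andbT.
    by apply: contraTneq yB => ->; move: xC; rewrite !inE => /andP [].
  congr wt.
  have -> : (G :\ x) :&: C = (G :&: C) :\ x.
    by apply/setP => y; rewrite !inE; case: (y == x); case: (y \in C); case: (y \in G).
  by rewrite [#|G :&: C|](cardsD1 x) in_setI xG xC.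
rewrite -sumr_const; apply: eq_bigr => x /setDP [/setDP [xG xB] xC].
rewrite /phi ifT; last first.
  apply/subsetP => y yB; rewrite !inE (subsetP BG) // andbT.
  by apply: contraTneq yB => ->.
congr wt; apply: eq_card => y.
move: xC; rewrite !inE; case: eqP => // -> /negbTE ->; by rewrite !andbF.
Qed.
Lemma card_DD n (F B G : {set 'I_n}) d : B \subset G -> B \subset F ->
  #|G| = d.+1 -> #|F| = d.+1 ->
  #|(G :\: B) :\: (F :\: B)| = (#|F :\: B| - #|G :&: (F :\: B)|)%N.
Proof.
move=> BG BF cG cF.
have e1 : #|G :\: B| = #|F :\: B|.
  by rewrite !cardsD (setIidPr BG) (setIidPr BF) cG cF.
rewrite -e1 -(cardsID (F :\: B) (G :\: B)).
have -> : (G :\: B) :&: (F :\: B) = G :&: (F :\: B).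
  by apply/setP => y; rewrite !inE; case: (y \in B); case: (y \in F); case: (y \in G).
by rewrite addKn.
Qed.

Lemma key1 n d (F B G : {set 'I_n}) : #|F| = d.+1 -> B \proper F -> #|G| = d.+1 ->
  G != F -> G :&: F != B -> \sum_(x in G) phi F B (G :\ x) = 0.
Proof.
move=> cF pBF cG GF GFB.
have BF := proper_sub pBF.
have [BG|nBG] := boolP (B \subset G); last first.
  apply: big1 => x xG; rewrite /phi ifF //; apply: contraNF nBG => H.
  exact: subset_trans H (subsetDl _ _).
rewrite phi_formula // (card_DD BG BF cG cF).
set C := F :\: B.
apply: wt_zero.
  rewrite lt0n cards_eq0; apply: contraNneq GFB => E; apply/eqP/setP => y.
  move/setP: E => /(_ y); rewrite !inE /=.
  case yB: (y \in B); last by case: (y \in F); case: (y \in G).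
  by rewrite (subsetP BG) ?(subsetP BF).
have le : (#|G :&: C| <= #|C|)%N by apply: subset_leq_card; apply: subsetIr.
rewrite ltn_neqAle le andbT; apply: contraNneq GF => E.
have CG : C \subset G.
  have : G :&: C == C by rewrite eqEcard subsetIr E leqnn.
  by move/eqP => <-; apply: subsetIl.
have FG : F \subset G.
  apply/subsetP => y yF; case yB: (y \in B); first by rewrite (subsetP BG).
  by apply: (subsetP CG); rewrite !inE yB yF.
by rewrite eq_sym eqEcard FG cG cF leqnn.
Qed.

Lemma key2 n d (F B : {set 'I_n}) : #|F| = d.+1 -> B \proper F ->
  \sum_(x in F) phi F B (F :\ x) != 0.
Proof.
move=> cF pBF; have BF := proper_sub pBF.
rewrite phi_formula // (card_DD BF BF cF cF).
have -> : F :&: (F :\: B) = F :\: B by apply/setIidPr; apply: subsetDl.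
apply: wt_nz.
move/properP: pBF => [_ [x xF xB]]; rewrite lt0n cards_eq0; apply/set0Pn.
by exists x; rewrite !inE xF xB.
Qed.
Lemma sum_dsets n d (psi : {set 'I_n} -> rat) (G : {set 'I_n}) : #|G| = d.+1 ->
  \sum_(t < #|[set T : {set 'I_n} | #|T| == d]|)
     psi (enum_val t) * (if enum_val t \subset G then 1 else 0)
  = \sum_(x in G) psi (G :\ x).
Proof.
move=> cG.
rewrite -(big_enum_val (fun T => psi T * (if T \subset G then 1 else 0))) /=.
rewrite -(big_imset _ (h := fun x => G :\ x)); last first.
  move=> x y xG yG /= E; apply/eqP; apply: contraT => nxy.
  have : x \in G :\ y by rewrite !inE nxy xG.
  by rewrite -E !inE eqxx.
rewrite big_mkcond [RHS]big_mkcond /=; apply: eq_bigr => T _.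
have -> : (T \in [set G :\ x | x in G]) = (T \in [set T0 : {set 'I_n} | #|T0| == d]) && (T \subset G).
  rewrite in_set; apply/imsetP/andP.
    move=> [x xG ->]; split; last exact: subsetDl.
    by move: cG; rewrite (cardsD1 x G) xG add1n => [[->]].
  move=> [/eqP cT TG].
  have : T \proper G by rewrite properEcard TG cT cG ltnSn.
  move/properP => [_ [x xG xT]]; exists x => //.
  apply/eqP; rewrite eqEcard; apply/andP; split.
    apply/subsetP => y yT; rewrite !inE (subsetP TG) // andbT.
    by apply: contraTneq yT => ->.
  by rewrite cT; move: cG; rewrite (cardsD1 x G) xG add1n => [[->]].
case: (T \in _) => /=; case: (T \subset G) => /=; by rewrite ?mulr1 ?mulr0.
Qed.
Lemma rank_lemma (K : fieldType) (I : finType) (k : nat) (X : I -> 'I_k -> K) (P : 'I_k -> I -> K) :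
  (forall a : I -> K, (forall i', \sum_i a i * (\sum_t X i t * P t i') = 0) -> forall i, a i = 0) ->
  (#|I| <= k)%N.
Proof.
move=> H.
pose MX := \matrix_(i < #|I|, j < k) X (enum_val i) j.
pose MP := \matrix_(j < k, i < #|I|) P j (enum_val i).
have rf : row_free (MX *m MP).
  apply: inj_row_free => v Hv; apply/rowP => r.
  have Ha := H (fun i => v 0 (enum_rank i)).
  rewrite mxE -(enum_valK r) Ha // => i'.
  move/rowP: Hv => /(_ (enum_rank i')); rewrite !mxE => E; apply: etrans E.
  rewrite (big_enum_val (fun i => v 0 (enum_rank i) * \sum_t X i t * P t i')) /=.
  apply: eq_bigr => r' _; rewrite enum_valK mxE; congr (_ * _).
  by apply: eq_bigr => t _; rewrite !mxE enum_rankK.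
move/eqP: rf => <-.
apply: leq_trans (mxrankM_maxr _ _) (rank_leq_row _).
Qed.
Definition pick2 (A : Type) m s (f : 'I_m -> A) (g : 'I_s -> A) (i : ('I_m + 'I_s)%type) : A :=
  match i with inl k => f k | inr l => g l end.

Definition V n (F B G : {set 'I_n}) := \sum_(x in G) phi F B (G :\ x).
End Aux.

Theorem claim4p3 (n d m s : nat)
  (F : 'I_m -> {set 'I_n}) (B : 'I_m -> {set 'I_n})
  (Y : 'I_s -> {set 'I_n}) (Z : 'I_s -> {set 'I_n})
  (F_inj : injective F)
  (F_card : forall i, #|F i| = d.+1)
  (F_vc : vc_dim_le F d)
  (B_max : forall i, max_admissible F i (B i))
  (Y_inj : injective Y)
  (Y_card : forall i, #|Y i| = d.+1)
  (Y_notF : forall i k, Y i != F k)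
  (Z_sub : forall i, Z i \subset Y i)
  (Z_card : forall i, #|Z i| = d)
  (H1 : forall i j, Z i != B j)
  (H2 : forall i j, i != j -> #|Y i :&: Y j| + 1 <= d)
  (H3 : forall i j : 'I_s, (i < j)%N ->
          ~ exists k : 'I_m, F k :&: Y i = Z i /\ F k :&: Y j = B k) :
  (m + s <= 'C(n, d))%N.
Proof.
pose Fr := pick2 F Y; pose Br := pick2 B Z.
have cFr : forall i, #|Fr i| = d.+1 by case.
have pBr : forall i, Br i \proper Fr i.
  case=> [k|l] /=; first by case: (B_max k) => [[]].
  by rewrite properEcard Z_sub Z_card Y_card ltnSn.
have K1 : forall i (G : {set 'I_n}), #|G| = d.+1 -> G != Fr i -> G :&: Fr i != Br i ->
    V (Fr i) (Br i) G = 0%R.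
  by move=> i G cG; apply: key1.
have K2 : forall i, V (Fr i) (Br i) (Fr i) != 0%R by move=> i; apply: key2.
suff : (#|{: 'I_m + 'I_s}| <= #|[set T : {set 'I_n} | #|T| == d]|)%N.
  by rewrite card_sum !card_ord card_draws card_ord.
apply: (@rank_lemma _ _ _ (fun i t => phi (Fr i) (Br i) (enum_val t))
          (fun t i' => if enum_val t \subset Fr i' then 1%R else 0%R)).
move=> a Ha.
have Hb : forall i', (\sum_i a i * V (Fr i) (Br i) (Fr i'))%R = 0%R.
  move=> i'; apply: etrans (Ha i'); apply: eq_bigr => i _; congr (_ * _)%R.
  by rewrite /V (sum_dsets (fun T => phi (Fr i) (Br i) T) (cFr i')).
have EF : forall k, (a (inl k) * V (F k) (B k) (F k)
     + \sum_j a (inr j) * V (Y j) (Z j) (F k) = 0)%R.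
  move=> k; move: (Hb (inl k)); rewrite big_sumType /Fr /Br /=.
  rewrite (bigD1 k) //= big1 ?addr0 //.
  move=> k0 nk0; rewrite (K1 (inl k0)) ?mulr0 //=.
  - by rewrite (inj_eq F_inj) eq_sym.
  - by case: (B_max k0) => [[_ ]].
have EY : forall l, (\sum_k a (inl k) * V (F k) (B k) (Y l)
     + a (inr l) * V (Y l) (Z l) (Y l) = 0)%R.
  move=> l; move: (Hb (inr l)); rewrite big_sumType /Fr /Br /=.
  rewrite [X in (_ + X)%R](bigD1 l) //= [X in (_ + (_ + X))%R]big1 ?addr0 //.
  move=> j njl; rewrite (K1 (inr j)) ?mulr0 //=.
  - by rewrite (inj_eq Y_inj) eq_sym.
  - apply/eqP => E; have := H2 l j; rewrite eq_sym njl E Z_card addn1 ltnn.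
    by move=> /(_ isT).
have stepF : forall k, (forall j, a (inr j) * V (Y j) (Z j) (F k) = 0)%R ->
    a (inl k) = 0%R.
  move=> k Hk; move: (EF k); rewrite big1 ?addr0; last by move=> j _; exact: Hk.
  move/eqP; rewrite mulf_eq0 (negbTE (K2 (inl k))) orbF => /eqP //.
have HC : forall t (l : 'I_s), (s - l <= t)%N -> a (inr l) = 0%R.
  elim=> [|t IH] l hl.
    by move: hl; rewrite leqn0 subn_eq0 leqNgt ltn_ord.
  have Hj : forall j : 'I_s, (l < j)%N -> a (inr j) = 0%R.
    move=> j lj; apply: IH; have := ltn_ord j; lia.
  have Hk : forall k, (a (inl k) * V (F k) (B k) (Y l) = 0)%R.
    move=> k; have [E|NE] := eqVneq (Y l :&: F k) (B k); last first.
      by rewrite (K1 (inl k)) ?mulr0 //= (Y_notF l k).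
    rewrite stepF ?mul0r // => j.
    have [lj|jl] := ltnP l j; first by rewrite Hj ?mul0r.
    rewrite (K1 (inr j)) ?mulr0 //=; first by rewrite eq_sym Y_notF.
    apply/eqP => E2.
    move: jl; rewrite leq_eqVlt => /orP [/eqP jl | jl].
      have jl' : j = l by apply: val_inj.
      subst j; move/eqP: (H1 l k); apply; by rewrite -E2 setIC E.
    have HH : F k :&: Y l = B k by rewrite setIC.
    exact: (H3 j l jl (ex_intro _ k (conj E2 HH))).
  move: (EY l); rewrite big1 ?add0r; last by move=> k _; exact: Hk.
  move/eqP; rewrite mulf_eq0 (negbTE (K2 (inr l))) orbF => /eqP //.
case=> [k|l].
  by apply: stepF => j; rewrite (HC s) ?mul0r // leq_subr.
by apply: (HC s); rewrite leq_subr.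
Qed.
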